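(* Let $(J,\mathcal F)$ and $w^S_j>0$ be as in the context, let $\mathbf c$ be $\mathcal F$-admissible, and let $\mathrm{AG}_2$ on input $\mathbf c$ produce $\boldsymbol\pi$, $\boldsymbol\nu$, sets $S_k$ and quantities $\nu^{S_k}_j$ ($j\in S_k$). Then for every $1\le m\le n$, $$\nu_{\pi_m}=\min\{\nu^{S_m}_j:j\in S_m\}.$$
   Context: $J$ finite, $|J|=n$; $\mathcal F\subseteq2^J$ with $\emptyset\in\mathcal F$, each nonempty $S\in\mathcal F$ having nonempty $\partial^-S=\{j\in S:S\setminus\{j\}\in\mathcal F\}$, each $S\in\mathcal F\ne J$ having $j\notin S$ with $S\cup\{j\}\in\mathcal F$. Coefficients $w^S_j>0$ for $j\in S\in\mathcal F$. $\mathrm{AG}_2$ on input $\mathbf c$: $S_1=J$, $\nu^{S_1}_j=c_j/w^{S_1}_j$ ($j\in J$), $\pi_1\in\arg\min\{\nu^{S_1}_j:j\in\partial^-S_1\}$, $\nu_{\pi_1}=\nu^{S_1}_{\pi_1}$; for $k=2..n$: $S_k=S_{k-1}\setminus\{\pi_{k-1}\}$, $\nu^{S_k}_j=\nu^{S_{k-1}}_j+(w^{S_{k-1}}_j/w^{S_k}_j-1)[\nu^{S_{k-1}}_j-\nu^{S_{k-1}}_{\pi_{k-1}}]$ ($j\in S_k$), $\pi_k\in\arg\min\{\nu^{S_k}_j:j\in\partial^-S_k\}$, $\nu_{\pi_k}=\nu^{S_k}_{\pi_k}$. $\mathbf c$ is $\mathcal F$-admissible if the output satisfies $\nu_{\pi_1}\le\cdots\le\nu_{\pi_n}$.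 *)

(* Defs.v *)
From HB Require Import structures.
From mathcomp Require Import all_boot all_order all_algebra.
Set Implicit Arguments. Unset Strict Implicit. Unset Printing Implicit Defensive.
Import Order.TTheory GRing.Theory Num.Theory.
Local Open Scope ring_scope.

Section AG2.
Variables (R : realFieldType) (J : finType).

Definition lower_boundary (F : {set {set J}}) (S : {set J}) : {set J} :=
  [set j in S | S :\ j \in F].

Definition set_system_ok (F : {set {set J}}) : Prop :=
  [/\ set0 \in F,
      (forall S, S \in F -> S != set0 -> lower_boundary F S != set0) &
      (forall S, S \in F -> S != [set: J] ->
         exists2 j, j \notin S & S :|: [set j] \in F)].

Definition weights_pos (F : {set {set J}}) (w : {set J} -> J -> R) : Prop :=
  forall S j, S \in F -> j \in S -> 0 < w S j.

(* Given the sequence of removed elements pi (0-indexed: pi k = pi_{k+1}),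
   the sets S k (= S_{k+1}) and the quantities nu k j (= nu^{S_{k+1}}_j). *)
Fixpoint AG2_S (pi : nat -> J) (k : nat) : {set J} :=
  match k with
  | 0 => [set: J]
  | k'.+1 => AG2_S pi k' :\ pi k'
  end.

Fixpoint AG2_nu (w : {set J} -> J -> R) (c : J -> R) (pi : nat -> J)
    (k : nat) (j : J) : R :=
  match k with
  | 0 => c j / w [set: J] j
  | k'.+1 =>
      AG2_nu w c pi k' j
      + (w (AG2_S pi k') j / w (AG2_S pi k) j - 1)
        * (AG2_nu w c pi k' j - AG2_nu w c pi k' (pi k'))
  end.

Definition AG2_run (F : {set {set J}}) (w : {set J} -> J -> R) (c : J -> R)
    (pi : nat -> J) : Prop :=
  forall k, (k < #|J|)%N ->
    pi k \in lower_boundary F (AG2_S pi k) /\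
    (forall j, j \in lower_boundary F (AG2_S pi k) ->
       AG2_nu w c pi k (pi k) <= AG2_nu w c pi k j).

Definition AG2_out (w : {set J} -> J -> R) (c : J -> R) (pi : nat -> J)
    (k : nat) : R := AG2_nu w c pi k (pi k).

Definition admissible_run (w : {set J} -> J -> R) (c : J -> R)
    (pi : nat -> J) : Prop :=
  forall k, (k.+1 < #|J|)%N -> AG2_out w c pi k <= AG2_out w c pi k.+1.

End AG2.

(* Main.v *)
Require Import Defs.
From HB Require Import structures.
From mathcomp Require Import all_boot all_order all_algebra.
From mathcomp Require Import zify ring.
Import Order.TTheory GRing.Theory Num.Theory.
Local Open Scope ring_scope.

Lemma setT_inF (J : finType) (F : {set {set J}}) :
  set_system_ok F -> [set: J] \in F.
Proof.
case=> F0 _ Fup.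
have H : forall k, (k <= #|J|)%N -> exists2 S, S \in F & (k <= #|S|)%N.
  elim=> [|k IH] Hk; first by exists set0.
  have [S SF HS] := IH (ltnW Hk).
  have [ST|SnT] := eqVneq S [set: J].
    exists S => //; rewrite ST cardsT; exact: Hk.
  have [j jS SjF] := Fup S SF SnT.
  exists (S :|: [set j]) => //.
  rewrite setUC cardsU1 (negbTE jS) /=; lia.
have [S SF HS] := H _ (leqnn _).
suff <- : S = [set: J] by [].
apply/eqP; rewrite eqEcard subsetT cardsT HS //.
Qed.

Theorem proposition2 (R : realFieldType) (J : finType)
    (F : {set {set J}}) (w : {set J} -> J -> R) (c : J -> R) (pi : nat -> J) :
  set_system_ok F ->
  weights_pos F w ->
  AG2_run F w c pi ->
  admissible_run w c pi ->
  forall m, (m < #|J|)%N ->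
    AG2_out w c pi m =
    AG2_nu w c pi m
      (Order.arg_min (pi m) (fun j => j \in AG2_S pi m) (AG2_nu w c pi m)).
Proof.
move=> Fok wpos run adm m mn.
set n := #|J|.
have piS : forall k, (k < n)%N -> pi k \in AG2_S pi k.
  move=> k kn; have [+ _] := run k kn.
  by rewrite /lower_boundary inE => /andP[].
have SF : forall k, (k <= n)%N -> AG2_S pi k \in F.
  elim=> [|k IH] kn; first exact: setT_inF.
  have [+ _] := run k kn.
  by rewrite /lower_boundary inE => /andP[].
have Scard : forall k, (k <= n)%N -> #|AG2_S pi k| = (n - k)%N.
  elim=> [|k IH] kn; first by rewrite /= cardsT subn0.
  have := cardsD1 (pi k) (AG2_S pi k).
  rewrite /= piS // IH ?(ltnW kn) //; lia.
have Sn : forall j, j \notin AG2_S pi n.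
  move=> j; have := Scard n (leqnn _); rewrite subnn => /eqP.
  by rewrite cards_eq0 => /eqP ->; rewrite inE.
have key : forall d k j, (k + d = n)%N -> j \in AG2_S pi k ->
    AG2_nu w c pi k j < AG2_out w c pi k -> False.
  elim=> [|d IH] k j kd jS lt.
    by move: jS; rewrite addn0 in kd; rewrite kd (negbTE (Sn j)).
  have kn : (k < n)%N by lia.
  have [ej|nej] := eqVneq j (pi k).
    by move: lt; rewrite ej /AG2_out ltxx.
  have jS1 : j \in AG2_S pi k.+1 by rewrite /= !inE nej jS.
  have [k1n|k1n] := ltnP k.+1 n; last first.
    have e : k.+1 = n by lia.
    by move: jS1; rewrite e (negbTE (Sn j)).
  apply: (IH k.+1 j) => //; first lia.
  apply: (lt_le_trans _ (adm k k1n)).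
  have a0 : 0 < w (AG2_S pi k) j := wpos _ _ (SF k (ltnW kn)) jS.
  have b0 : 0 < w (AG2_S pi k.+1) j := wpos _ _ (SF k.+1 (ltnW k1n)) jS1.
  rewrite -subr_lt0.
  have -> : AG2_nu w c pi k.+1 j - AG2_out w c pi k =
     (w (AG2_S pi k) j / w (AG2_S pi k.+1) j) *
       (AG2_nu w c pi k j - AG2_out w c pi k).
    rewrite /= /AG2_out.
    set A := w _ j; set B := w _ j.
    ring.
  by rewrite pmulr_rlt0 ?divr_gt0 // subr_lt0.
have ge : forall j, j \in AG2_S pi m -> AG2_out w c pi m <= AG2_nu w c pi m j.
  move=> j jS; rewrite leNgt; apply/negP => lt.
  by apply: (key (n - m)%N m j _ jS lt); lia.
case: (@arg_minP _ R _ (pi m) (fun j => j \in AG2_S pi m) (AG2_nu w c pi m) (piS m mn)).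
move=> i iS imin.
apply/eqP; rewrite eq_le ge //=.
exact: imin (piS m mn).
Qed.
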